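(* The algebras $\mathcal{A}$ and $T$ coincide. In particular, $\{M^{t,p}_{i,j}\mid (i,j,t,p)\in\mathcal{I}_m\}$ is a basis of $T$, and $T$ equals the centralizer algebra of the stabilizer $\mathrm{Aut}_{x_0}(O_{m+1})$, i.e. the algebra of complex $X\times X$ matrices invariant under simultaneously permuting rows and columns by elements of $\mathrm{Aut}_{x_0}(O_{m+1})$.
   Context: Let $m$ be a positive integer, $S=\{1,\ldots,2m+1\}$, $X$ the set of $m$-subsets of $S$, and $O_{m+1}$ the Odd graph on $X$ (adjacency = disjointness), with distance function $\partial$ and diameter $m$. Let $x_0=\{1,\ldots,m\}$ and $\mathrm{Aut}_{x_0}(O_{m+1})$ the stabilizer of $x_0$ in the automorphism group. $A_1$ is the adjacency matrix; $E^*_i$ ($0\leq i\leq m$) is the diagonal $X\times X$ matrix with $(y,y)$-entry $1$ if $\partial(x_0,y)=i$, else $0$. The Terwilliger algebra $T$ is the subalgebra of complex $X\times X$ matrices generated by $A_1,E^*_0,\ldots,E^*_m$. For $(x,y,z)\in X^3$ let $\partial(x,y,z):=(|x\cap y|,|x\cap z|,|y\cap z|,|x\cap y\cap z|)$, and $\mathcal{I}_m$ the set of four-tuples realized as some $\partial(x,y,z)$. For $(i,j,t,p)\in\mathcal{I}_m$, $M^{t,p}_{i,j}$ is the $0/1$ matrix with $(x,y)$-entry $1$ iff $\partial(x_0,x,y)=(i,j,t,p)$. $\mathcal{A}$ is the complex linear span of $\{M^{t,p}_{i,j}:(i,j,t,p)\in\mathcal{I}_m\}$. *)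

(* Defs.v *)
From HB Require Import structures.
From mathcomp Require Import all_boot all_order all_algebra.
From mathcomp Require Import fingroup perm complex Rstruct.

Set Implicit Arguments.
Unset Strict Implicit.
Unset Printing Implicit Defensive.

Import Order.TTheory GRing.Theory Num.Theory.
Local Open Scope ring_scope.

Definition Cplx : Type := (complex Rdefinitions.R).

Definition Sset (m : nat) := 'I_(m.*2.+1).
Definition X (m : nat) : finType := {A : {set Sset m} | #|A| == m}.
Definition x0set (m : nat) : {set Sset m} := [set i : Sset m | (nat_of_ord i < m)%N].

Lemma card_x0set (m : nat) : #|x0set m| == m.
Proof.
have le : (m <= m.*2.+1)%N by rewrite -addnn ltnW // ltnS leq_addr.
have -> : x0set m = [set widen_ord le i | i in 'I_m].
  apply/setP => j; rewrite !inE; apply/idP/imsetP => [jm|[i _ ->]]; last by rewrite /= ltn_ord.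
  by exists (Ordinal jm) => //; apply/val_inj.
by rewrite card_imset ?card_ord // => a b /(congr1 val) ab; exact: val_inj.
Qed.

Definition x0 (m : nat) : X m := exist _ (x0set m) (card_x0set m).

(* Adjacency in the Odd graph O_{m+1}: disjointness. *)
Definition adj (m : nat) (x y : X m) : bool := [disjoint val x & val y].

Fixpoint walk (m : nat) (k : nat) (x y : X m) : bool :=
  if k is k'.+1 then [exists z : X m, adj x z && walk k' z y] else x == y.

Definition dist_is (m : nat) (x y : X m) (i : nat) : bool :=
  walk i x y && [forall j : 'I_i, ~~ walk j x y].

Definition Mat (m : nat) := 'M[Cplx]_(#|X m|).
Definition ent (m : nat) (B : Mat m) (x y : X m) : Cplx :=
  B (enum_rank x) (enum_rank y).
Definition mkMat (m : nat) (f : X m -> X m -> Cplx) : Mat m :=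
  \matrix_(i, j) f (enum_val i) (enum_val j).

Definition A1 (m : nat) : Mat m := mkMat (fun x y => (adj x y)%:R).

Definition Estar (m : nat) (i : nat) : Mat m :=
  mkMat (fun x y => ((x == y) && dist_is (x0 m) y i)%:R).

Inductive inT (m : nat) : Mat m -> Prop :=
  | inT_A1 : inT (A1 m)
  | inT_Estar (i : nat) : (i <= m)%N -> inT (Estar m i)
  | inT_add (B C : Mat m) : inT B -> inT C -> inT (B + C)
  | inT_scale (c : Cplx) (B : Mat m) : inT B -> inT (c *: B)
  | inT_mul (B C : Mat m) : inT B -> inT C -> inT (B *m C).

(* Four-tuples (i,j,t,p); all entries are at most m, so we index by 'I_(m+1). *)
Definition tup (m : nat) := ('I_m.+1 * 'I_m.+1 * 'I_m.+1 * 'I_m.+1)%type.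

Definition dtriple (m : nat) (x y z : X m) : nat * nat * nat * nat :=
  (#|val x :&: val y|, #|val x :&: val z|, #|val y :&: val z|,
   #|val x :&: val y :&: val z|)%N.

Definition tup_nat (m : nat) (τ : tup m) : nat * nat * nat * nat :=
  let: (i, j, t, p) := τ in (i : nat, j : nat, t : nat, p : nat).

Definition inI (m : nat) (τ : tup m) : bool :=
  [exists x : X m, exists y : X m, exists z : X m, dtriple x y z == tup_nat τ].

Definition Mtp (m : nat) (τ : tup m) : Mat m :=
  mkMat (fun x y => (dtriple (x0 m) x y == tup_nat τ)%:R).

Definition inA (m : nat) (B : Mat m) : Prop :=
  exists c : tup m -> Cplx, B = \sum_(τ : tup m | inI τ) c τ *: Mtp τ.

Definition is_aut (m : nat) (s : {perm X m}) : bool :=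
  [forall x : X m, forall y : X m, adj (s x) (s y) == adj x y].

Definition in_stab (m : nat) (s : {perm X m}) : bool := is_aut s && (s (x0 m) == x0 m).

Definition in_centralizer (m : nat) (B : Mat m) : Prop :=
  forall s : {perm X m}, in_stab s -> forall x y : X m, ent B (s x) (s y) = ent B x y.

(* Main.v *)
Require Import Defs.
From HB Require Import structures.
From mathcomp Require Import all_boot all_order all_algebra.
From mathcomp Require Import fingroup perm complex Rstruct.
From mathcomp Require Import zify.
Import GRing.Theory Num.Theory.

Set Implicit Arguments.
Unset Strict Implicit.
Unset Printing Implicit Defensive.


Definition NM (m : nat) (F : X m -> X m -> nat) : Mat m :=
  mkMat (fun x y => ((F x y)%:R : Cplx)%R).

Definition cmp (m : nat) (F G : X m -> X m -> nat) : X m -> X m -> nat :=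
  fun x y => \sum_(z : X m) F x z * G z y.

Lemma NM_mul m (F G : X m -> X m -> nat) : (NM F *m NM G = NM (cmp F G))%R.
Proof.
apply/matrixP => i j; rewrite !mxE /cmp natr_sum.
rewrite (big_enum_val (fun z : X m => ((F (enum_val i) z * G z (enum_val j))%:R : Cplx)%R)) /=.
by apply: eq_bigr => k _; rewrite !mxE natrM.
Qed.

Definition inTF m (F : X m -> X m -> nat) := inT (NM F).

Lemma inTF_cmp m (F G : X m -> X m -> nat) : inTF F -> inTF G -> inTF (cmp F G).
Proof. by rewrite /inTF -NM_mul; apply: inT_mul. Qed.

Lemma inT0 m : inT (0 : Mat m)%R.
Proof. by rewrite -(scale0r (A1 m)); apply: inT_scale; apply: inT_A1. Qed.

Lemma inT_sum m (I : finType) (P : pred I) (F : I -> Mat m) :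
  (forall i, P i -> inT (F i)) -> inT (\sum_(i | P i) F i)%R.
Proof.
move=> H; apply: (big_ind (fun B => inT B)); [exact: inT0 | exact: inT_add | exact: H].
Qed.

Lemma cmp_pos m (F G : X m -> X m -> nat) x y :
  (0 < cmp F G x y) = [exists z, (0 < F x z) && (0 < G z y)].
Proof.
rewrite /cmp lt0n sum_nat_eq0 negb_forall; apply/existsP/existsP => [[z H]|[z H]]; exists z; move: H.
  by rewrite muln_eq0 negb_or -!lt0n.
by case/andP=> a b; rewrite muln_eq0 negb_or -!lt0n a b.
Qed.

Lemma card_X m (x : X m) : #|val x| = m.
Proof. exact: eqP (valP x). Qed.

Lemma card_S m : #|[set: Sset m]| = m.*2.+1.
Proof. by rewrite cardsT card_ord. Qed.

Lemma card_C m (x : X m) : #|~: val x| = m.+1.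
Proof. have := cardsC (val x); rewrite card_X card_ord; lia. Qed.

Lemma card_x0 m : #|x0set m| = m.
Proof. exact: eqP (card_x0set m). Qed.

Definition mkX m (A : {set Sset m}) (H : #|A| = m) : X m := exist _ A (introT eqP H).

Lemma X_eq m (x y : X m) : m <= #|val x :&: val y| -> x = y.
Proof.
move=> H; apply: val_inj.
have sxy: val x \subset val y.
  have e: val x :&: val y = val x.
    apply/eqP; rewrite eqEcard subsetIl card_X //.
  by rewrite -e subsetIr.
apply/eqP; rewrite eqEcard sxy /=; by have := card_X x; have := card_X y; move=> /= -> ->.
Qed.

Lemma cardI_le m (x y : X m) : #|val x :&: val y| <= m.
Proof. by apply: leq_trans (subset_leq_card (subsetIl _ _)) _; rewrite card_X. Qed.

Lemma sval_val m (x : X m) : sval x = val x. Proof. by []. Qed.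

Definition Wk (m k s : nat) : bool := if odd k then s <= k./2 else m <= s + k./2.

Lemma adj_sub m (x z : X m) : adj x z -> val z \subset ~: val x.
Proof. by rewrite /adj disjoint_sym disjoints_subset. Qed.

Lemma sub_adj m (x z : X m) : val z \subset ~: val x -> adj x z.
Proof. by rewrite /adj disjoint_sym disjoints_subset. Qed.

Lemma cardCI m (x y : X m) : #|~: val x :&: val y| = m - #|val x :&: val y|.
Proof. by rewrite setIC -setDE cardsD card_X setIC. Qed.

Lemma nbr_card m (x y z : X m) : adj x z ->
  (#|val z :&: val y| == m - #|val x :&: val y|) ||
  (#|val z :&: val y|.+1 == m - #|val x :&: val y|).
Proof.
move/adj_sub => zU.
have h1 := cardsID (val z) (~: val x :&: val y).
have e : ~: val x :&: val y :&: val z = val z :&: val y.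
  apply/setP => w; rewrite !inE; case: (boolP (w \in val z)) => wz; last by rewrite !andbF.
  by have := subsetP zU w wz; rewrite !inE => -> /=; rewrite andbT.
rewrite e cardCI in h1.
have h2 : #|~: val x :&: val y :\: val z| <= 1.
  apply: leq_trans (_ : #|~: val x :\: val z| <= 1).
    apply: subset_leq_card; apply/subsetP => w; rewrite !inE.
    by case/andP=> a /andP [b _]; rewrite a b.
  by rewrite cardsDS // card_C card_X subSnn.
have := cardI_le x y; lia.
Qed.

Lemma pick_in (T : finType) (A : {set T}) : 0 < #|A| -> exists w, w \in A.
Proof. by rewrite card_gt0 => /set0Pn. Qed.

Lemma nbr_ex m (x y : X m) (b : bool) : (b ==> (#|val x :&: val y| < m)) ->
  exists z : X m, adj x z && (#|val z :&: val y| + b == m - #|val x :&: val y|).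
Proof.
move=> hb.
have [w wA] : exists w, w \in (if b then ~: val x :&: val y else ~: val x :\: val y).
  apply: pick_in; case: b hb => hb.
    by rewrite cardCI; move: hb; rewrite implyTb; lia.
  by rewrite cardsD card_C cardCI; have := cardI_le x y; lia.
have wU : w \in ~: val x by move: wA {hb}; case: b; rewrite !inE; case/andP => /= a b; rewrite ?inE ?a ?b.
have cz : #|~: val x :\ w| = m by have := cardsD1 w (~: val x); rewrite wU card_C; lia.
exists (mkX cz); apply/andP; split.
  by apply: sub_adj => /=; apply: subD1set.
have e : (~: val x :\ w) :&: val y = (~: val x :&: val y) :\ w.
  by apply/setP => v; rewrite !inE; case: (v == w); rewrite /= ?andbF.
rewrite /= e; have := cardsD1 w (~: val x :&: val y); rewrite cardCI.
case: b wA {hb} => /=; rewrite !inE => /andP [a1 a2].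
  by rewrite a1 a2 /=; lia.
by rewrite ?(negbTE a1) ?(negbTE a2) ?andbF ?andFb /=; lia.
Qed.

Lemma Wk_back m k s v : s <= m -> ((v == m - s) || (v.+1 == m - s)) -> Wk m k v -> Wk m k.+1 s.
Proof.
rewrite /Wk /= uphalf_half; have := odd_double_half k; case: (odd k) => /=; lia.
Qed.

Lemma Wk_fwd m k s : s <= m -> Wk m k.+1 s ->
  Wk m k (m - s) || ((s < m) && Wk m k (m - s).-1).
Proof.
rewrite /Wk /= uphalf_half; have := odd_double_half k; case: (odd k) => /=; lia.
Qed.

Lemma walkP m k (x y : X m) : walk k x y = Wk m k #|val x :&: val y|.
Proof.
elim: k x => [|k IH] x /=.
  rewrite /Wk /= addn0; apply/eqP/idP => [->|h]; last exact: X_eq.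
  by rewrite setIid card_X.
apply/existsP/idP => [[z /andP [axz]]|h].
  rewrite IH => wz; apply: Wk_back (cardI_le _ _) (nbr_card y axz) wz.
have := Wk_fwd (cardI_le x y) h; case/orP => [hw|/andP [lt hw]].
  have [z /andP [axz /eqP e]] := nbr_ex (x:=x) (y:=y) (b:=false) isT.
  by exists z; rewrite axz IH; rewrite addn0 in e; rewrite e.
have [z /andP [axz /eqP e]] := nbr_ex (x:=x) (y:=y) (b:=true) lt.
by exists z; rewrite axz IH; have -> : #|val z :&: val y| = (m - #|val x :&: val y|).-1 by lia.
Qed.

Definition delta (m s : nat) := minn (m - s).*2 s.*2.+1.

Lemma WkE m j s : Wk m j s = ((~~ odd j) && ((m - s).*2 <= j)) || (odd j && (s.*2.+1 <= j)).
Proof.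
rewrite /Wk; have := odd_double_half j; case: (odd j) => /= h.
  apply/idP/idP; lia.
apply/idP/idP; lia.
Qed.

Lemma odd_delta m s : odd (delta m s) = (s.*2.+1 < (m - s).*2).
Proof.
rewrite /delta /minn; case: ltnP => h /=; rewrite ?odd_double /=;
  [apply/esym/negbTE; rewrite -leqNgt | apply/esym]; lia.
Qed.

Lemma Wk_delta m s : Wk m (delta m s) s.
Proof.
rewrite WkE odd_delta /delta /minn.
have [h|h] := ltnP ((m - s).*2) (s.*2.+1).
  by apply/orP; left; apply/andP; split; [rewrite -leqNgt; lia|].
have hb : s.*2.+1 < (m - s).*2 by lia.
by rewrite hb /=; lia.
Qed.

Lemma Wk_ge m j s : Wk m j s -> delta m s <= j.
Proof.
rewrite WkE /delta => /orP [/andP [_ h]|/andP [_ h]]; rewrite geq_min h ?orbT //.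
Qed.

Lemma dist_arith m d s :
  (Wk m d s && [forall j : 'I_d, ~~ Wk m j s]) = (d == delta m s).
Proof.
apply/idP/eqP => [/andP [h /forallP hf]|->].
  apply/eqP; rewrite eqn_leq Wk_ge // andbT leqNgt; apply/negP => lt.
  by have := hf (Ordinal lt); rewrite Wk_delta.
rewrite Wk_delta /=; apply/forallP => j; apply/negP => /Wk_ge.
by rewrite leqNgt ltn_ord.
Qed.

Lemma delta_inj m s l : s <= m -> l <= m -> (delta m s == delta m l) = (s == l).
Proof.
move=> hs hl; apply/eqP/eqP => [|->] //.
rewrite /delta /minn.
have [h1|h1] := ltnP ((m - s).*2) (s.*2.+1); have [h2|h2] := ltnP ((m - l).*2) (l.*2.+1); lia.
Qed.

Lemma delta_le m s : s <= m -> delta m s <= m.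
Proof. rewrite /delta /minn; case: ltnP; lia. Qed.

Definition ell m (y : X m) := #|x0set m :&: val y|.

Lemma ell_le m (y : X m) : ell y <= m.
Proof. by apply: leq_trans (subset_leq_card (subsetIl _ _)) _; rewrite card_x0. Qed.

Definition Dl m (l : nat) : X m -> X m -> nat := fun x y => (x == y) && (ell y == l).

Arguments Dl : clear implicits.

Lemma NM_ext m (F G : X m -> X m -> nat) : (forall x y, F x y = G x y) -> NM F = NM G.
Proof. by move=> h; apply/matrixP => i j; rewrite !mxE h. Qed.

Lemma NM0 m : NM (fun _ _ : X m => 0) = 0%R.
Proof. by apply/matrixP => i j; rewrite !mxE. Qed.

Lemma Estar_D m l : l <= m -> Estar m (delta m l) = NM (Dl m l).
Proof.
move=> hl; apply/matrixP => i j; rewrite !mxE /Dl /dist_is.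
case: (enum_val i == enum_val j) => //=.
rewrite walkP (eq_forallb (fun k : 'I_ _ => congr1 negb (walkP k (x0 m) (enum_val j)))).
by rewrite dist_arith delta_inj // ?ell_le // eq_sym.
Qed.

Lemma inT_D m l : inTF (Dl m l).
Proof.
case: (leqP l m) => hl.
  by rewrite /inTF -Estar_D //; apply: inT_Estar; apply: delta_le.
rewrite /inTF (NM_ext (G := fun _ _ => 0)) ?NM0; first exact: inT0.
move=> x y; rewrite /Dl; case: eqP => // _; case: eqP => // e.
by have := ell_le y; rewrite e leqNgt hl.
Qed.

Lemma inT_A m : inTF (fun x y : X m => nat_of_bool (adj x y)).
Proof. exact: inT_A1. Qed.

Ltac bdec := repeat match goal with |- context [?u \in ?A] => case: (u \in A) end.
Ltac setdec := let t := fresh "t" in apply/setP => t;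
  rewrite ?(in_setI, in_setD, in_setC, in_setU, in_set1, in_setD1); bdec; done.

Definition Ad m (x y : X m) : nat := adj x y.
Arguments Ad : clear implicits.
Definition TS m l k l' := cmp (cmp (cmp (cmp (Dl m l) (Ad m)) (Dl m k)) (Ad m)) (Dl m l').
Arguments TS : clear implicits.

Lemma Dl_pos m l (x y : X m) : (0 < Dl m l x y) = (x == y) && (ell y == l).
Proof. by rewrite /Dl lt0b. Qed.

Lemma inT_TS m l k l' : inTF (TS m l k l').
Proof. by rewrite /TS; do ! apply: inTF_cmp; (apply: inT_D || apply: inT_A). Qed.

Lemma TS_posE m l k l' (z y : X m) : 0 < TS m l k l' z y ->
  [/\ ell z = l, ell y = l' & exists w, [/\ ell w = k, adj z w & adj w y]].
Proof.
rewrite /TS cmp_pos => /existsP [a /andP [h1]].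
rewrite Dl_pos; case/andP => /eqP ay /eqP ey; subst a.
move: h1; rewrite cmp_pos => /existsP [b /andP [h1]]; rewrite /Ad lt0b => ab.
move: h1; rewrite cmp_pos => /existsP [c /andP [h1]]; rewrite Dl_pos; case/andP => /eqP cb /eqP ek; subst c.
move: h1; rewrite cmp_pos => /existsP [d /andP [h1]]; rewrite /Ad lt0b => db.
move: h1; rewrite Dl_pos; case/andP => /eqP zd /eqP ez; subst d.
by split => //; exists b.
Qed.

Lemma TS_posI m l k l' (z y w : X m) : ell z = l -> ell y = l' -> ell w = k ->
  adj z w -> adj w y -> 0 < TS m l k l' z y.
Proof.
move=> ez ey ew zw wy; rewrite /TS cmp_pos; apply/existsP; exists y.
rewrite Dl_pos eqxx ey eqxx /= andbT cmp_pos; apply/existsP; exists w.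
rewrite /Ad lt0b wy andbT cmp_pos; apply/existsP; exists w.
rewrite Dl_pos eqxx ew eqxx /= andbT cmp_pos; apply/existsP; exists z.
by rewrite Dl_pos eqxx ez eqxx /Ad lt0b zw.
Qed.

Definition Pp m (x y : X m) := #|x0set m :&: val x :&: val y|.
Definition Qq m (x y : X m) := #|~: x0set m :&: val x :&: val y|.

Lemma cardC0 m (y : X m) : #|~: x0set m :&: val y| = m - ell y.
Proof. by rewrite setIC -setDE cardsD card_X /ell setIC. Qed.

Lemma sub_card_eq (T : finType) (A B : {set T}) : A \subset B -> #|B| <= #|A| -> A = B.
Proof. by move=> s c; apply/eqP; rewrite eqEcard s c. Qed.

(* two adjacent steps: z and y both avoid w *)
Lemma two_step_card m (z w y : X m) : adj z w -> adj w y -> #|val z :\: val y| <= 1.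
Proof.
move=> zw0 wy0.
have zw : val z \subset ~: val w by rewrite -disjoints_subset.
have yw : val y \subset ~: val w by rewrite -disjoints_subset disjoint_sym.
have : #|val z :|: val y| <= m.+1.
  by rewrite -(card_C w); apply: subset_leq_card; rewrite subUset zw yw.
have := cardsU (val z) (val y); rewrite cardsD !card_X; lia.
Qed.

Definition dX m (z y : X m) := #|x0set m :&: val z :\: val y|.
Definition dC m (z y : X m) := #|~: x0set m :&: val z :\: val y|.

Lemma dXC m (z y : X m) : dX z y + dC z y = #|val z :\: val y|.
Proof.
rewrite /dX /dC -(cardsID (x0set m) (val z :\: val y)).
have -> : x0set m :&: val z :\: val y = (val z :\: val y) :&: x0set m by setdec.
have -> : ~: x0set m :&: val z :\: val y = (val z :\: val y) :\: x0set m by setdec.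
by [].
Qed.

Lemma region_le m (R : {set Sset m}) (x z y : X m) :
  #|R :&: val x :&: val z| <= #|R :&: val x :&: val y| + #|R :&: val z :\: val y|.
Proof.
apply: leq_trans (leq_card_setU _ _)  ; apply: subset_leq_card.
apply/subsetP => t; rewrite !inE.
by case: (t \in R); case: (t \in val x); case: (t \in val z); case: (t \in val y).
Qed.

Lemma card_Cx0 m : #|~: x0set m| = m.+1.
Proof. have := cardsC (x0set m); rewrite card_x0 card_ord; lia. Qed.

Lemma stepA m l l' (z y : X m) : 0 < TS m l (m - l) l' z y ->
  [/\ dX z y = l - l', l' <= l & dX z y + dC z y <= 1].
Proof.
case/TS_posE => ez ey [w [ew zw wy]].
have h1 := two_step_card zw wy; rewrite -dXC in h1.
have zw' : val w \subset ~: val z by apply: adj_sub.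
have yw' : val y \subset ~: val w by apply: adj_sub.
have W0 : x0set m :&: val w = x0set m :&: ~: val z.
  apply: sub_card_eq; first by rewrite setIS.
  rewrite -setDE cardsD card_x0; have := ell_le z; rewrite /ell in ew ez *; rewrite ew ez; lia.
have s0 : x0set m :&: val y \subset x0set m :&: val z.
  apply/subsetP => t; rewrite !in_setI => /andP [t0 ty]; rewrite t0 /=.
  apply/negPn/negP => tz.
  have : t \in x0set m :&: val w by rewrite W0 in_setI in_setC t0.
  rewrite in_setI => /andP [_ tw].
  by have := subsetP yw' t ty; rewrite in_setC tw.
have e : x0set m :&: val z :&: val y = x0set m :&: val y.
  by rewrite -(setIidPr s0); setdec.
have le : l' <= l by rewrite -ey -ez; apply: subset_leq_card.
split => //; rewrite /dX cardsD e; rewrite /ell in ez ey; rewrite ez ey //.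
Qed.

Lemma stepB m l k l' (z y : X m) : 0 < TS m l k l' z y -> k + l + 1 = m ->
  [/\ dC z y = l' - l, l <= l' & dX z y + dC z y <= 1].
Proof.
case/TS_posE => ez ey [w [ew zw wy]] hk.
have h1 := two_step_card zw wy; rewrite -dXC in h1.
have zw' : val w \subset ~: val z by apply: adj_sub.
have yw' : val y \subset ~: val w by apply: adj_sub.
have W0 : ~: x0set m :&: val w = ~: x0set m :&: ~: val z.
  apply: sub_card_eq; first by rewrite setIS.
  rewrite cardC0 -setDE cardsD card_Cx0 cardC0 ew ez; have := ell_le z; lia.
have s0 : ~: x0set m :&: val y \subset ~: x0set m :&: val z.
  apply/subsetP => t; rewrite !in_setI => /andP [t0 ty]; rewrite t0 /=.
  apply/negPn/negP => tz.
  have : t \in ~: x0set m :&: val w by rewrite W0 in_setI t0 /= in_setC; exact: tz.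
  rewrite in_setI => /andP [_ tw].
  by have := subsetP yw' t ty; rewrite in_setC tw.
have e : ~: x0set m :&: val z :&: val y = ~: x0set m :&: val y.
  by rewrite -(setIidPr s0); setdec.
have le : m - l' <= m - l by rewrite -ey -ez -!cardC0; apply: subset_leq_card.
have := ell_le y; have := ell_le z; rewrite ey ez => hy hz.
split => //; first (rewrite /dC cardsD e !cardC0 ez ey; lia).
lia.
Qed.


Definition Z0 m (x y : X m) : nat := 0.
Arguments Z0 : clear implicits.

Unset Implicit Arguments.
Fixpoint Bf m (n i j p q : nat) : X m -> X m -> nat :=
  match n with
  | 0 => if [&& i == j, p <= i & q <= m - i] then Dl m i else Z0 m
  | n'.+1 =>
    if j < i then cmp (Bf m n' i j.+1 p.+1 q) (TS m j.+1 (m - j.+1) j)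
    else if i < j then cmp (Bf m n' i j.-1 p q.+1) (TS m j.-1 (m - j) j)
    else if q < m - i then cmp (Bf m n' i i p q.+1) (TS m i (m - i) i)
    else if (p < i) && (i < m) then cmp (Bf m n' i i p.+1 q) (TS m i (m - i - 1) i)
    else if [&& i == j, p <= i & q <= m - i] then Dl m i else Z0 m
  end.
Set Implicit Arguments.

Lemma inT_Z0 m : inTF (Z0 m).
Proof. by rewrite /inTF NM0; apply: inT0. Qed.

Lemma inT_Bf m n i j p q : inTF (Bf m n i j p q).
Proof.
elim: n i j p q => [|n IH] i j p q /=.
  by case: ifP => _; [apply: inT_D | apply: inT_Z0].
repeat (case: ifP => _); try (apply: inTF_cmp; [exact: IH | exact: inT_TS]).
  exact: inT_D.
exact: inT_Z0.
Qed.

Lemma Pp_xx m (x : X m) : Pp x x = ell x.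
Proof. by rewrite /Pp -setIA setIid. Qed.

Lemma Qq_xx m (x : X m) : Qq x x = m - ell x.
Proof. by rewrite /Qq -setIA setIid cardC0. Qed.


Lemma Bf_supp m n : forall i j p q (x y : X m), 0 < Bf m n i j p q x y ->
  [/\ ell x = i, ell y = j, p <= Pp x y & q <= Qq x y].
Proof.
have base : forall i j p q (x y : X m),
    0 < (if [&& i == j, p <= i & q <= m - i] then Dl m i else Z0 m) x y ->
    [/\ ell x = i, ell y = j, p <= Pp x y & q <= Qq x y].
  move=> i j p q x y; case: ifP => [/and3P [/eqP <- hp hq]|_] //.
  rewrite Dl_pos => /andP [/eqP xy /eqP ey]; subst y.
  by rewrite Pp_xx Qq_xx ey.
have rX := @region_le m (x0set m).
have rC := @region_le m (~: x0set m).
elim: n => [|n IH] i j p q x y /=; first exact: base.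
case: ifP => h1.
  rewrite cmp_pos => /existsP [z /andP [/IH [ex ez hp hq] hs]].
  have [_ ey _] := TS_posE hs; move: hs => /stepA [e1 e2 e3].
  have := rX x z y; have := rC x z y; rewrite /Pp /Qq /dX /dC in hp hq e1 e3 *.
  split => //; lia.
case: ifP => h2.
  rewrite cmp_pos => /existsP [z /andP [/IH [ex ez hp hq] hs]].
  have [_ ey _] := TS_posE hs; have := ell_le y; rewrite ey => jm.
  move: hs => /stepB [|e1 e2 e3]; first lia.
  have := rX x z y; have := rC x z y; rewrite /Pp /Qq /dX /dC in hp hq e1 e3 *.
  split => //; lia.
case: ifP => h3.
  rewrite cmp_pos => /existsP [z /andP [/IH [ex ez hp hq] hs]].
  have [_ ey _] := TS_posE hs; move: hs => /stepA [e1 e2 e3].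
  have := rX x z y; have := rC x z y; rewrite /Pp /Qq /dX /dC in hp hq e1 e3 *.
  split => //; lia.
case: ifP => h4; last exact: base.
rewrite cmp_pos => /existsP [z /andP [/IH [ex ez hp hq] hs]].
have [_ ey _] := TS_posE hs; move: hs => /stepB [|e1 e2 e3]; first lia.
have := rX x z y; have := rC x z y; rewrite /Pp /Qq /dX /dC in hp hq e1 e3 *.
split => //; lia.
Qed.

Lemma PQ m (x y : X m) : Pp x y + Qq x y = #|val x :&: val y|.
Proof.
rewrite /Pp /Qq -(cardsID (x0set m) (val x :&: val y)).
have -> : x0set m :&: val x :&: val y = (val x :&: val y) :&: x0set m by setdec.
by have -> : ~: x0set m :&: val x :&: val y = (val x :&: val y) :\: x0set m by setdec.
Qed.

Lemma Pp_le m (x y : X m) : Pp x y <= ell x /\ Pp x y <= ell y.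
Proof.
by split; apply: subset_leq_card; apply/subsetP => t; rewrite !in_setI;
  case: (t \in x0set m); case: (t \in val x); case: (t \in val y).
Qed.

Lemma Qq_le m (x y : X m) : Qq x y <= m - ell x /\ Qq x y <= m - ell y.
Proof.
by rewrite -!cardC0; split; apply: subset_leq_card; apply/subsetP => t; rewrite !in_setI;
  case: (t \in ~: x0set m); case: (t \in val x); case: (t \in val y).
Qed.

Lemma cD1 m (x y : X m) : #|x0set m :&: val x :\: val y| = ell x - Pp x y.
Proof. by rewrite cardsD. Qed.
Lemma cD2 m (x y : X m) : #|x0set m :&: val y :\: val x| = ell y - Pp x y.
Proof. by rewrite cardsD /Pp; have -> : x0set m :&: val y :&: val x = x0set m :&: val x :&: val y by setdec. Qed.
Lemma cD3 m (x y : X m) : #|~: x0set m :&: val x :\: val y| = (m - ell x) - Qq x y.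
Proof. by rewrite cardsD cardC0. Qed.
Lemma cD4 m (x y : X m) : #|~: x0set m :&: val y :\: val x| = (m - ell y) - Qq x y.
Proof. by rewrite cardsD cardC0 /Qq; have -> : ~: x0set m :&: val y :&: val x = ~: x0set m :&: val x :&: val y by setdec. Qed.

Lemma card_add (T : finType) (R A : {set T}) b : b \notin A ->
  #|R :&: (b |: A)| = (b \in R) + #|R :&: A|.
Proof.
move=> bA; rewrite (cardsD1 b) in_setI in_setU1 eqxx andbT.
have -> : R :&: (b |: A) :\ b = R :&: A; last by [].
apply/setP => t; rewrite !inE; case: (eqVneq t b) => [->|] //=.
by rewrite (negbTE bA) andbF.
Qed.

Lemma card_swapR (T : finType) (R A : {set T}) a b : a \in A -> b \notin A ->
  #|R :&: (b |: (A :\ a))| + (a \in R) = #|R :&: A| + (b \in R).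
Proof.
move=> aA bA.
rewrite card_add; last by rewrite in_setD1 (negbTE bA) andbF.
have -> : #|R :&: A| = (a \in R) + #|R :&: (A :\ a)|.
  rewrite -card_add ?setD1K //; by rewrite in_setD1 eqxx.
lia.
Qed.

Lemma mkstep m (x y : X m) a b : a \in val y -> b \notin val y ->
  exists z w : X m, [/\ val z = b |: (val y :\ a), adj z w, adj w y,
    ell w = m - (ell y + (b \in x0set m)) &
    [/\ ell z + (a \in x0set m) = ell y + (b \in x0set m),
        Pp x z + (a \in x0set m :&: val x) = Pp x y + (b \in x0set m :&: val x) &
        Qq x z + (a \in ~: x0set m :&: val x) = Qq x y + (b \in ~: x0set m :&: val x)]].
Proof.
move=> ay bny.
have cz : #|b |: (val y :\ a)| = m.
  have nb : (b \notin val y :\ a) = true by rewrite in_setD1 (negbTE bny) andbF.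
  rewrite cardsU1 nb; have := cardsD1 a (val y); rewrite ay card_X; lia.
have cw : #|~: (b |: val y)| = m.
  have := cardsC (b |: val y); rewrite cardsU1 bny card_X card_ord; lia.
exists (mkX cz), (mkX cw); split => /=.
- by [].
- by rewrite /adj disjoints_subset setCK; apply: setUS; apply: subD1set.
- by rewrite /adj disjoints_subset setCS; apply: subsetUr.
- by rewrite /ell -setDE cardsD card_x0 card_add // addnC.
- rewrite /ell /Pp /Qq; split.
  + exact: card_swapR.
  + by rewrite card_swapR.
  + by rewrite card_swapR.
Qed.

Lemma ell_m m (x : X m) : ell x = m -> val x = x0set m.
Proof.
move=> e.
have e1 : x0set m :&: val x = x0set m by apply: sub_card_eq; rewrite ?subsetIl // card_x0; move: e; rewrite /ell => ->.
apply/esym/sub_card_eq; last by rewrite card_x0 card_X.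
by rewrite -e1 subsetIr.
Qed.

Lemma Bf_pos m n : forall i j p q (x y : X m), ell x = i -> ell y = j ->
  Pp x y = p -> Qq x y = q -> n + p + q = m -> 0 < Bf m n i j p q x y.
Proof.
elim: n => [|n IH] i j p q x y ex ey ep eq hn /=.
  have hxy : m <= #|val x :&: val y| by rewrite -PQ; lia.
  have e := X_eq hxy; subst y.
  rewrite Pp_xx in ep; rewrite Qq_xx in eq.
  have -> : [&& i == j, p <= i & q <= m - i] by apply/and3P; split; lia.
  by rewrite Dl_pos eqxx /= -ex eqxx.
have [p1 p2] := Pp_le x y; have [q1 q2] := Qq_le x y.
rewrite ep eq ex ey in p1 p2 q1 q2.
have lx := ell_le x; have ly := ell_le y; rewrite ex ey in lx ly.
have {q1}q1 : q + i <= m by lia.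
have {q2}q2 : q + j <= m by lia.
case: ifP => h1.
  have [b hb] : exists b, b \in x0set m :&: val x :\: val y by apply: pick_in; rewrite cD1 ex ep subn_gt0; lia.
  have [a ha] : exists a, a \in ~: x0set m :&: val y :\: val x by apply: pick_in; rewrite cD4 ey eq subn_gt0; lia.
  move: hb; rewrite in_setD in_setI => /andP [by0 /andP [b0 bx]].
  move: ha; rewrite in_setD in_setI in_setC => /andP [ax0 /andP [a0 ay]].
  have [z [w [vz zw wy ew [ez pz qz]]]] := mkstep x ay by0.
  move: ez pz qz; rewrite !in_setI !in_setC b0 bx (negbTE a0) (negbTE ax0) /= => ez pz qz.
  rewrite cmp_pos; apply/existsP; exists z; apply/andP; split.
    by apply: IH => //; clear -ez ey pz ep qz eq hn; lia.
  by apply: (TS_posI (w := w)) => //; [clear -ez ey; lia | by rewrite ew ey b0 addn1].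
case: ifP => h2.
  have [b hb] : exists b, b \in ~: x0set m :&: val x :\: val y by apply: pick_in; rewrite cD3 ex eq subn_gt0; lia.
  have [a ha] : exists a, a \in x0set m :&: val y :\: val x by apply: pick_in; rewrite cD2 ey ep subn_gt0; lia.
  move: hb; rewrite in_setD in_setI in_setC => /andP [by0 /andP [b0 bx]].
  move: ha; rewrite in_setD in_setI => /andP [ax0 /andP [a0 ay]].
  have [z [w [vz zw wy ew [ez pz qz]]]] := mkstep x ay by0.
  move: ez pz qz; rewrite !in_setI !in_setC (negbTE b0) bx a0 (negbTE ax0) /= => ez pz qz.
  rewrite cmp_pos; apply/existsP; exists z; apply/andP; split.
    by apply: IH => //; clear -ez ey pz ep qz eq hn; lia.
  by apply: (TS_posI (w := w)) => //; [clear -ez ey; lia | by rewrite ew ey (negbTE b0) addn0].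
have eij : j = i by clear -h1 h2; lia.
rewrite eij in ey p2 q2 ly h1 h2 *.
case: ifP => h3.
  have [b hb] : exists b, b \in ~: x0set m :&: val x :\: val y by apply: pick_in; rewrite cD3 ex eq subn_gt0; lia.
  have [a ha] : exists a, a \in ~: x0set m :&: val y :\: val x by apply: pick_in; rewrite cD4 ey eq subn_gt0; lia.
  move: hb; rewrite in_setD in_setI in_setC => /andP [by0 /andP [b0 bx]].
  move: ha; rewrite in_setD in_setI in_setC => /andP [ax0 /andP [a0 ay]].
  have [z [w [vz zw wy ew [ez pz qz]]]] := mkstep x ay by0.
  move: ez pz qz; rewrite !in_setI !in_setC (negbTE b0) bx (negbTE a0) (negbTE ax0) /= => ez pz qz.
  rewrite cmp_pos; apply/existsP; exists z; apply/andP; split.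
    by apply: IH => //; clear -ez ey pz ep qz eq hn; lia.
  by apply: (TS_posI (w := w)) => //; [clear -ez ey; lia | by rewrite ew ey (negbTE b0) addn0].
have hq : q = m - i by lia.
case: ifP => h4.
  have [b hb] : exists b, b \in x0set m :&: val x :\: val y by apply: pick_in; rewrite cD1 ex ep subn_gt0; lia.
  have [a ha] : exists a, a \in x0set m :&: val y :\: val x by apply: pick_in; rewrite cD2 ey ep subn_gt0; lia.
  move: hb; rewrite in_setD in_setI => /andP [by0 /andP [b0 bx]].
  move: ha; rewrite in_setD in_setI => /andP [ax0 /andP [a0 ay]].
  have [z [w [vz zw wy ew [ez pz qz]]]] := mkstep x ay by0.
  move: ez pz qz; rewrite !in_setI !in_setC b0 bx a0 (negbTE ax0) /= => ez pz qz.
  rewrite cmp_pos; apply/existsP; exists z; apply/andP; split.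
    by apply: IH => //; clear -ez ey pz ep qz eq hn; lia.
  by apply: (TS_posI (w := w)) => //; [clear -ez ey; lia | by rewrite ew ey b0 addn1 subnS subn1].
exfalso; move/negbT: h4; rewrite negb_and -!leqNgt => /orP [] h.
  by move/negbT: h3; rewrite -leqNgt => h3; clear -h p1 h3 q1 hn; lia.
have em : i = m by clear -h lx; lia.
have sx := ell_m (etrans ex em); have sy := ell_m (etrans ey em).
move: ep; rewrite /Pp sx sy !setIid card_x0 => ep.
by clear -ep hn; lia.
Qed.

Lemma perm_fibres (T : finType) (K : eqType) (f g : T -> K) :
  (forall k, #|[set t | f t == k]| = #|[set t | g t == k]|) ->
  exists s : {perm T}, forall t, g (s t) = f t.
Proof.
move=> hc.
pose F t := enum [set u | f u == f t].
pose G t := enum [set u | g u == f t].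
pose h t := nth t (G t) (index t (F t)).
have sF t : size (F t) = size (G t) by rewrite /F /G -!cardE hc.
have tF t : t \in F t by rewrite /F mem_enum inE.
have iF t : index t (F t) < size (G t) by rewrite -sF index_mem.
have hG t : h t \in G t by rewrite /h mem_nth.
have gh t : g (h t) = f t by have := hG t; rewrite /G mem_enum inE => /eqP.
have hinj : injective h.
  move=> t1 t2 e.
  have ef : f t1 = f t2 by rewrite -!gh e.
  have eF : F t1 = F t2 by rewrite /F ef.
  have eG : G t1 = G t2 by rewrite /G ef.
  move: e; rewrite /h [nth t1 _ _](set_nth_default t2) ?iF // eG eF.
  have i1 : index t1 (F t2) < size (G t2) by rewrite -eF -eG iF.
  move/eqP; rewrite nth_uniq ?enum_uniq ?i1 ?iF // => /eqP ei.
  by rewrite -(nth_index t1 (tF t1)) -(nth_index t1 (tF t2)) eF ei.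
exists (perm hinj) => t; by rewrite permE gh.
Qed.

Lemma cardS (T : finType) (A : {set T}) : #|A| = \sum_t (t \in A : nat).
Proof. by rewrite -sum1_card big_mkcond /=; apply: eq_bigr => t _; case: (t \in A). Qed.

Lemma cardT' (T : finType) : #|T| = \sum_(t : T) 1.
Proof. by rewrite sum1_card. Qed.

Definition NA (T : finType) (a b c : {set T}) (al be ga : bool) :=
  #|[set t | ((t \in a) == al) && ((t \in b) == be) && ((t \in c) == ga)]|.

Lemma venn_eqs (T : finType) (a b c : {set T}) :
  let N := NA a b c in
  #|a| = N true true true + N true true false + N true false true + N true false false /\
      #|b| = N true true true + N true true false + N false true true + N false true false /\
      #|c| = N true true true + N true false true + N false true true + N false false true /\
      #|a :&: b| = N true true true + N true true false /\
      #|a :&: c| = N true true true + N true false true /\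
      #|b :&: c| = N true true true + N false true true /\
      #|a :&: b :&: c| = N true true true /\
      #|T| = N true true true + N true true false + N true false true + N true false false
           + N false true true + N false true false + N false false true + N false false false.
Proof.
rewrite /NA !cardS cardT' -!big_split /=.
by do ! split; apply: eq_bigr => t _; rewrite !inE; case: (t \in a); case: (t \in b); case: (t \in c).
Qed.

Lemma venn (T : finType) (a b c a' b' c' : {set T}) :
  #|a| = #|a'| -> #|b| = #|b'| -> #|c| = #|c'| ->
  #|a :&: b| = #|a' :&: b'| -> #|a :&: c| = #|a' :&: c'| -> #|b :&: c| = #|b' :&: c'| ->
  #|a :&: b :&: c| = #|a' :&: b' :&: c'| ->
  exists s : {perm T}, forall t,
    [/\ (s t \in a') = (t \in a), (s t \in b') = (t \in b) & (s t \in c') = (t \in c)].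
Proof.
move=> h1 h2 h3 h4 h5 h6 h7.
have [e1 [e2 [e3 [e4 [e5 [e6 [e7 e8]]]]]]] := venn_eqs a b c.
have [f1 [f2 [f3 [f4 [f5 [f6 [f7 f8]]]]]]] := venn_eqs a' b' c'.
have hk : forall k, #|[set t | (t \in a, t \in b, t \in c) == k]| =
                     #|[set t | (t \in a', t \in b', t \in c') == k]|.
  case=> [[al be] ga].
  have -> : [set t | (t \in a, t \in b, t \in c) == (al, be, ga)] =
    [set t | ((t \in a) == al) && ((t \in b) == be) && ((t \in c) == ga)].
    by apply/setP => t; rewrite !inE !xpair_eqE.
  have -> : [set t | (t \in a', t \in b', t \in c') == (al, be, ga)] =
    [set t | ((t \in a') == al) && ((t \in b') == be) && ((t \in c') == ga)].
    by apply/setP => t; rewrite !inE !xpair_eqE.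
  rewrite -/(NA a b c al be ga) -/(NA a' b' c' al be ga).
  by case: al; case: be; case: ga; lia.
have [s hs] := perm_fibres hk.
exists s => t; have ee := hs t; injection ee => g3 g2 g1; by split.
Qed.

Lemma card_liftX m (s : {perm Sset m}) (x : X m) : #|s @: val x| = m.
Proof. by rewrite card_imset ?card_X //; apply: perm_inj. Qed.

Definition liftX m (s : {perm Sset m}) (x : X m) : X m := mkX (card_liftX s x).

Lemma liftX_inj m (s : {perm Sset m}) : injective (liftX s).
Proof.
move=> x y e; apply: val_inj; apply: (imset_inj (@perm_inj _ s)).
by have := congr1 val e.
Qed.

Definition liftP m (s : {perm Sset m}) : {perm X m} := perm (@liftX_inj m s).

Lemma liftPE m (s : {perm Sset m}) x : val (liftP s x) = s @: val x.
Proof. by rewrite permE. Qed.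

Lemma imsetI_perm (T : finType) (s : {perm T}) (A B : {set T}) :
  s @: (A :&: B) = s @: A :&: s @: B.
Proof. by apply: imsetI => u v _ _; apply: perm_inj. Qed.

Lemma card_imperm (T : finType) (s : {perm T}) (A : {set T}) : #|s @: A| = #|A|.
Proof. by rewrite card_imset //; apply: perm_inj. Qed.

Lemma liftP_aut m (s : {perm Sset m}) : is_aut (liftP s).
Proof.
apply/forallP => x; apply/forallP => y; apply/eqP.
by rewrite /adj !liftPE -!setI_eq0 -imsetI_perm imset_eq0.
Qed.

Lemma liftP_dtriple m (s : {perm Sset m}) (a b c : X m) :
  dtriple (liftP s a) (liftP s b) (liftP s c) = dtriple a b c.
Proof. by rewrite /dtriple !liftPE -!imsetI_perm !card_imperm. Qed.

Lemma imset_perm_eq (T : finType) (s : {perm T}) (A A' : {set T}) :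
  (forall u, (s u \in A') = (u \in A)) -> s @: A = A'.
Proof.
move=> h; apply/setP => t; apply/imsetP/idP => [[u uA ->]|tA]; first by rewrite h.
by exists (s^-1 t)%g; rewrite -?h ?permKV.
Qed.

Lemma trans_stab m (x y x' y' : X m) : dtriple (x0 m) x y = dtriple (x0 m) x' y' ->
  exists s : {perm X m}, [/\ in_stab s, s x = x' & s y = y'].
Proof.
rewrite /dtriple /= => e; case: e => e1 e2 e3 e4.
have [s hs] := @venn _ (x0set m) (val x) (val y) (x0set m) (val x') (val y')
  erefl (etrans (card_X x) (esym (card_X x'))) (etrans (card_X y) (esym (card_X y')))
  e1 e2 e3 e4.
exists (liftP s); split.
- rewrite /in_stab liftP_aut /=; apply/eqP/val_inj; rewrite liftPE.
  by apply: imset_perm_eq => u; have [] := hs u.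
- by apply/val_inj; rewrite liftPE; apply: imset_perm_eq => u; have [] := hs u.
- by apply/val_inj; rewrite liftPE; apply: imset_perm_eq => u; have [] := hs u.
Qed.

Lemma realize_x0 m (a b c : X m) : exists x y : X m, dtriple (x0 m) x y = dtriple a b c.
Proof.
have ea : #|val a| = #|x0set m| by rewrite card_X card_x0.
have eaa : #|val a :&: val a| = #|x0set m :&: x0set m| by rewrite !setIid.
have eaaa : #|val a :&: val a :&: val a| = #|x0set m :&: x0set m :&: x0set m| by rewrite !setIid.
have [s hs] := venn ea ea ea eaa eaa eaa eaaa.
exists (liftP s b), (liftP s c); rewrite -(liftP_dtriple s a b c); congr dtriple.
by apply/val_inj; rewrite liftPE /=; apply/esym; apply: imset_perm_eq => u; have [] := hs u.
Qed.

Local Open Scope ring_scope.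

Lemma ent_mk m (f : X m -> X m -> Cplx) x y : ent (mkMat f) x y = f x y.
Proof. by rewrite /ent /mkMat mxE !enum_rankK. Qed.

Lemma entM m (B C : Mat m) x y : ent (B *m C) x y = \sum_z ent B x z * ent C z y.
Proof.
rewrite /ent mxE (big_enum_val (fun z : X m => B (enum_rank x) (enum_rank z) * C (enum_rank z) (enum_rank y))) /=.
by apply: eq_bigr => k _; rewrite enum_valK.
Qed.

Lemma entD m (B C : Mat m) x y : ent (B + C) x y = ent B x y + ent C x y.
Proof. by rewrite /ent mxE. Qed.

Lemma entZ m c (B : Mat m) x y : ent (c *: B) x y = c * ent B x y.
Proof. by rewrite /ent mxE. Qed.

Lemma walk_aut m (s : {perm X m}) k : is_aut s -> forall u v, walk k (s u) (s v) = walk k u v.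
Proof.
move=> /forallP ha; elim: k => [|k IH] u v /=; first by rewrite (inj_eq (@perm_inj _ s)).
apply/existsP/existsP => [[z /andP [a w]]|[z /andP [a w]]].
  exists ((s^-1)%g z); have e : s ((s^-1)%g z) = z := permKV s z.
  rewrite -IH e w andbT.
  by have := (forallP (ha u)) ((s^-1)%g z) => /eqP <-; rewrite e.
exists (s z); rewrite IH w andbT.
by have := (forallP (ha u)) z => /eqP ->.
Qed.

Lemma inT_inv m (B : Mat m) : inT B -> in_centralizer B.
Proof.
elim => {B} [|i _|B C _ hB _ hC|c B _ hB|B C _ hB _ hC] s hs x y.
- rewrite !ent_mk; case/andP: hs => /forallP ha _.
  by have := (forallP (ha x)) y => /eqP ->.
- rewrite !ent_mk /dist_is; case/andP: hs => ha /eqP h0.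
  rewrite (inj_eq (@perm_inj _ s)) -{1 2}h0 walk_aut //.
  congr ((_ && (_ && _))%:R); apply: eq_forallb => j; rewrite walk_aut //.
- by rewrite !entD hB ?hC.
- by rewrite !entZ hB.
- rewrite !entM (reindex_inj (@perm_inj _ s)) /=.
  by apply: eq_bigr => z _; rewrite hB ?hC.
Qed.

Local Close Scope ring_scope.

Definition dtup m (x y : X m) : tup m :=
  (inord (ell x), inord (ell y), inord #|val x :&: val y|, inord (Pp x y)).

Lemma Pp_le' m (x y : X m) : Pp x y <= m.
Proof. by have [h _] := Pp_le x y; apply: leq_trans h (ell_le x). Qed.

Lemma tup_nat_dtup m (x y : X m) : tup_nat (dtup x y) = dtriple (x0 m) x y.
Proof.
rewrite /dtup /tup_nat /dtriple /= !inordK //; rewrite ltnS.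
- exact: Pp_le'.
- exact: cardI_le.
- exact: ell_le.
- exact: ell_le.
Qed.

Lemma tup_nat_inj m : injective (@tup_nat m).
Proof.
move=> [[[a b] c] d] [[[a' b'] c'] d'] /= [e1 e2 e3 e4].
by rewrite (val_inj e1) (val_inj e2) (val_inj e3) (val_inj e4).
Qed.

Lemma Mtp_ent m (t : tup m) x y : ent (Mtp t) x y = ((dtup x y == t)%:R : Cplx)%R.
Proof.
rewrite /Mtp ent_mk -tup_nat_dtup; congr (_%:R)%R; congr nat_of_bool.
by apply/eqP/eqP => [/tup_nat_inj|->].
Qed.

Lemma inI_dtup m (t : tup m) : inI t = [exists x : X m, exists y : X m, dtup x y == t].
Proof.
apply/existsP/existsP => [[a /existsP [b /existsP [c /eqP e]]]|[x /existsP [y /eqP e]]].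
  have [x [y e']] := realize_x0 a b c.
  exists x; apply/existsP; exists y; apply/eqP/tup_nat_inj.
  by rewrite tup_nat_dtup e' e.
exists (x0 m); apply/existsP; exists x; apply/existsP; exists y.
by rewrite -tup_nat_dtup e.
Qed.

Lemma constancy m (B : Mat m) : in_centralizer B ->
  forall x y x' y', dtup x y = dtup x' y' -> ent B x y = ent B x' y'.
Proof.
move=> hB x y x' y' e.
have e' : dtriple (x0 m) x y = dtriple (x0 m) x' y' by rewrite -!tup_nat_dtup e.
have [s [hs <- <-]] := trans_stab e'.
by rewrite hB.
Qed.

Definition coef m (B : Mat m) (t : tup m) : Cplx :=
  if [pick xy : X m * X m | dtup xy.1 xy.2 == t] is Some xy then ent B xy.1 xy.2 else 0%R.

Lemma coef_ent m (B : Mat m) : in_centralizer B -> forall x y, coef B (dtup x y) = ent B x y.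
Proof.
move=> hB x y; rewrite /coef; case: pickP => [[a b] /= /eqP e|/(_ (x, y))].
  exact: constancy e.
by rewrite /= eqxx.
Qed.

Lemma mat_ent m (A B : Mat m) : (forall x y, ent A x y = ent B x y) -> A = B.
Proof.
move=> h; apply/matrixP => i j; have := h (enum_val i) (enum_val j).
by rewrite /ent !enum_valK.
Qed.

Lemma ent_sum m (I : finType) (P : pred I) (F : I -> Mat m) x y :
  ent (\sum_(i | P i) F i)%R x y = (\sum_(i | P i) ent (F i) x y)%R.
Proof. by rewrite /ent summxE. Qed.

Lemma sum_ind (I : finType) (P : pred I) (F : I -> Cplx) (d : I) :
  (\sum_(s | P s) F s * ((d == s)%:R : Cplx))%R = if P d then F d else 0%R.
Proof.
rewrite big_mkcond (bigD1 d) //= big1 ?addr0 => [|s hs].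
  by rewrite eqxx mulr1; case: (P d).
by rewrite eq_sym (negbTE hs) mulr0; case: (P s).
Qed.

Lemma decomp m (B : Mat m) : in_centralizer B ->
  B = (\sum_(t : tup m | inI t) coef B t *: Mtp t)%R.
Proof.
move=> hB; apply: mat_ent => x y; rewrite ent_sum.
under eq_bigr => t _ do rewrite entZ Mtp_ent.
rewrite sum_ind inI_dtup coef_ent //.
by case: existsP => // [[]]; exists x; apply/existsP; exists y.
Qed.

Lemma Mtp_inT m : forall k (tau : tup m), m - tau.1.2 < k -> inT (Mtp tau).
Proof.
elim=> [|k IH] // tau hk.
case: (pickP (fun xy : X m * X m => dtup xy.1 xy.2 == tau)) => [[xs ys] /= /eqP ed|none]; last first.
  rewrite (_ : Mtp tau = 0%R); first exact: inT0.
  apply: mat_ent => x y; rewrite Mtp_ent /ent mxE.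
  by have := none (x, y); rewrite /= => ->.
move: (ed) hk; case: tau ed => [[[i j] t] p] ed ed' /= hk.
have := congr1 (@tup_nat m) ed'; rewrite tup_nat_dtup /dtriple /= => [[e1 e2 e3 e4]].
have hpq := PQ xs ys; have tm := cardI_le xs ys.
rewrite e3 in hpq tm.
have eP : Pp xs ys = p by [].
have eQ : Qq xs ys = t - p by rewrite /Pp in e4; lia.
have ptt : p <= t by rewrite -eP; lia.
pose G := Bf m (m - t) i j p (t - p).
have hpos : 0 < G xs ys.
  apply: Bf_pos => //; rewrite /Pp in e4; lia.
pose B := NM G.
have hBT : inT B := inT_Bf m (m - t) i j p (t - p).
have hB := inT_inv hBT.
have entB : forall x y, ent B x y = ((G x y)%:R : Cplx)%R by move=> x y; rewrite /B /NM ent_mk.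
pose c := coef B (i, j, t, p).
have hc : c = ((G xs ys)%:R : Cplx)%R by rewrite /c -ed' coef_ent // entB.
have c0 : c != 0%R by rewrite hc pnatr_eq0 -lt0n.
pose S := (\sum_(s : tup m | (s != (i, j, t, p)) && (coef B s != 0%R)) coef B s *: Mtp s)%R.
have hS : inT S.
  apply: inT_sum => s /andP [ne nz]; apply: inT_scale; apply: IH.
  move: nz; rewrite /coef; case: pickP => [[x y] /= /eqP es|]; last by rewrite eqxx.
  rewrite entB pnatr_eq0 -lt0n => /Bf_supp [ex ey hp hq].
  have := congr1 (@tup_nat m) es; rewrite tup_nat_dtup; case: s es ne => [[[i' j'] t'] p'] es ne.
  rewrite /dtriple /= => [[f1 f2 f3 f4]].
  have hpq' := PQ x y; have tm' := cardI_le x y.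
  rewrite f3 in hpq' tm'.
  have : t < t'.
    rewrite ltn_neqAle; apply/andP; split; last by clear -hp hq hpq' ptt; lia.
    apply/eqP => ett; move: ne; rewrite -ed' -es.
    suff -> : dtup x y = dtup xs ys by rewrite eqxx.
    rewrite /dtup; congr (inord _, inord _, inord _, inord _).
    - by rewrite ex /ell e1.
    - by rewrite ey /ell e2.
    - by rewrite f3 e3.
    - by clear -hp hq hpq' ett eP ptt; lia.
  lia.
have -> : Mtp (i, j, t, p) = (c^-1 *: (B + (-1) *: S))%R.
  apply: mat_ent => x y.
  rewrite Mtp_ent entZ entD entZ /S ent_sum.
  under eq_bigr => s _ do rewrite entZ Mtp_ent.
  rewrite sum_ind -coef_ent //.
  case: eqP => [->|ne] /=.
    by rewrite -/c mulr0 addr0 mulVf.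
  have [->|nz] := eqVneq (coef B (dtup x y)) 0%R.
    by rewrite /= mulr0 addr0 mulr0.
  by rewrite /= mulN1r subrr mulr0.
by apply: inT_scale; apply: inT_add => //; apply: inT_scale.
Qed.

Local Open Scope ring_scope.

Lemma Mtp_T m (tau : tup m) : inT (Mtp tau).
Proof. by apply: (@Mtp_inT m (m - tau.1.2).+1). Qed.

Lemma inA_T m (B : Mat m) : inA B -> inT B.
Proof.
case=> c ->; apply: inT_sum => t _; apply: inT_scale; exact: Mtp_T.
Qed.

Lemma cent_A m (B : Mat m) : in_centralizer B -> inA B.
Proof. by move=> h; exists (coef B); apply: decomp. Qed.

Unset Implicit Arguments.

Theorem theorem3p8 (m : nat) (hm : (0 < m)%N) :
  (forall B : Mat m, inT B <-> inA B) /\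
  (forall c : tup m -> Cplx,
     \sum_(τ : tup m | inI τ) c τ *: Mtp τ = 0 ->
     forall τ : tup m, inI τ -> c τ = 0) /\
  (forall B : Mat m, inT B <-> in_centralizer B).
Proof.
split; [|split].
- move=> B; split; last exact: inA_T.
  by move=> h; apply: cent_A; apply: inT_inv.
- move=> c h t ht.
  have := ht; rewrite inI_dtup => /existsP [x /existsP [y /eqP e]].
  have := congr1 (fun M => ent M x y) h; rewrite ent_sum /= /ent mxE.
  under eq_bigr => s _ do rewrite -/(ent _ x y) entZ Mtp_ent.
  by rewrite sum_ind e ht.
- move=> B; split; first exact: inT_inv.
  by move=> h; apply: inA_T; apply: cent_A.
Qed.
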